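(* Let $T=(V,E)$ be an infinite spherically symmetric rooted tree with root $v_0$ and branching degrees $(d_r)_{r\ge0}$, $d_r\ge2$, $\sup_rd_r<\infty$, and let $S_n$, $\mathcal U_{n,r}$, $\mathcal V_n$ be as in the context. Then: (1) $\dim\ell^2(S_n)=|S_n|=\prod_{q=0}^{n-1}d_q$ for all $n\ge0$; (2) $\dim\mathcal U_{n,r}=\big(\prod_{q=0}^{n-2}d_q\big)(d_{n-1}-1)$ for all $n\ge2$, $r\ge n$; $\dim\mathcal U_{1,r}=d_0-1$ for all $r\ge1$; and $\dim\mathcal U_{0,r}=1$ for all $r\ge0$; (3) $\dim\mathcal V_n=\infty$ for all $n\ge0$.
   Context: A rooted tree with root $v_0$ is spherically symmetric with branching degrees $(d_r)$ if every vertex at distance $r$ from $v_0$ has exactly $d_r$ neighbours at distance $r+1$. $|v|$ is the distance to $v_0$, $S_r=\{v:|v|=r\}$, $\ell^2(S_r)\subset\ell^2(V)$ the functions vanishing off $S_r$; for $v\ne v_0$, $v_-$ is the neighbour of $v$ closer to $v_0$. $H$ is the operator on $\ell^2(V)$ with $(H\xi)(v)=\xi(v_-)$ for $v\ne v_0$ and $(H\xi)(v_0)=0$. Define $\mathcal U_{0,0}=\ell^2(S_0)$ and $\mathcal U_{0,r}=H^r(\mathcal U_{0,0})$; inductively for $n\ge1$, $\mathcal U_{n,n}$ is the orthogonal complement of $\mathcal U_{0,n}\oplus\cdots\oplus\mathcal U_{n-1,n}$ in $\ell^2(S_n)$, $\mathcal U_{n,r}=H^{r-n}(\mathcal U_{n,n})$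 for $r\ge n$; and $\mathcal V_n=\bigoplus_{r\ge n}\mathcal U_{n,r}$. *)

(* Defs.v *)
From HB Require Import structures.
From mathcomp Require Import all_boot all_order all_algebra.
From mathcomp Require Import reals complex.
Set Implicit Arguments. Unset Strict Implicit. Unset Printing Implicit Defensive.
Import Order.TTheory GRing.Theory Num.Theory.
Local Open Scope ring_scope.

(* A vertex at distance r from the root v0 is a word (i_0,...,i_{r-1})
   with i_q < d q; its parent v_- is obtained by deleting the last letter.
   Lev d r is the sphere S_r; the root v0 is the empty word (Lev d 0). *)
Definition Lev (d : nat -> nat) (r : nat) : finType :=
  {dffun forall i : 'I_r, 'I_(d i)}.

Definition parent (d : nat -> nat) (r : nat) (v : Lev d r.+1) : Lev d r :=
  [ffun i : 'I_r => v (widen_ord (leqnSn r) i) : 'I_(d i)].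

Definition Vert (d : nat -> nat) := {r : nat & Lev d r}.

Section Tree.
Variables (R : realType) (d : nat -> nat).
Notation C := (R[i]).

Definition Fn (r : nat) := {ffun Lev d r -> C^o}.

Definition dotS r (x y : Fn r) : C :=
  \sum_(v : Lev d r) (x v : C) * ((y v : C)^*).

Definition orthS r (U : {vspace Fn r}) : {vspace Fn r} :=
  (\bigcap_(u <- vbasis U) lker (linfun (fun x : Fn r => (dotS x u : C^o))))%VS.

Definition Hlev r : 'Hom(Fn r, Fn r.+1) :=
  linfun (fun xi : Fn r => [ffun v : Lev d r.+1 => xi (parent v)]).

Fixpoint Hit (m k : nat) : {vspace Fn m} -> {vspace Fn (k + m)} :=
  match k return {vspace Fn m} -> {vspace Fn (k + m)} with
  | 0 => fun U => U
  | k'.+1 => fun U => (Hlev (k' + m) @: Hit k' U)%VS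
  end.

(* H^(n-m)(U) for a subspace U of l^2(S_m), m <= n, as a subspace of
   l^2(S_n) (the zero subspace if n < m, which is never used). *)
Definition Hto (m n : nat) (U : {vspace Fn m}) : {vspace Fn n} :=
  (if (m <= n)%N as b return (m <= n)%N = b -> {vspace Fn n}
   then fun h => ecast k {vspace Fn k} (subnK h) (Hit (n - m) U)
   else fun _ => 0%VS) (erefl (m <= n)%N).

(* Utab n m = U_{m,m} for every m <= n:
   U_{0,0} = l^2(S_0), and U_{m,m} = orthogonal complement in l^2(S_m) of
   U_{0,m} + ... + U_{m-1,m} (a direct sum). *)
Fixpoint Utab (n : nat) : forall m : nat, {vspace Fn m} :=
  match n with
  | 0 => fun m => fullv
  | n'.+1 => fun m =>
      if (m <= n')%N then Utab n' m
      else orthS (\sum_(k < m) Hto m (Utab n' k))%VS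
  end.

Definition Unn (n : nat) : {vspace Fn n} := Utab n n.

(* U_{n,r} = H^{r-n}(U_{n,n}) for r >= n (zero subspace for r < n). *)
Definition Unr (n r : nat) : {vspace Fn r} := Hto r (Unn n).

Definition in_l2 (xi : Vert d -> C) : Prop :=
  exists M : C, forall N : nat,
    \sum_(r < N) \sum_(v : Lev d r) `|xi (existT _ (r : nat) v)| ^+ 2 <= M.

Definition restr (xi : Vert d -> C) (r : nat) : Fn r :=
  [ffun v : Lev d r => (xi (existT _ r v) : C^o)].

(* V_n = (Hilbert) orthogonal direct sum of the U_{n,r}, r >= n:
   the square-summable xi whose component on each sphere S_r lies in
   U_{n,r} for r >= n and vanishes for r < n. *)
Definition Vn (n : nat) (xi : Vert d -> C) : Prop :=
  in_l2 xi /\ forall r : nat, restr xi r \in (if (n <= r)%N then Unr n r else 0%VS).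

Definition lin_indep (N : nat) (f : 'I_N -> Vert d -> C) : Prop :=
  forall c : 'I_N -> C,
    (forall v, \sum_(i < N) c i * f i v = 0) -> forall i, c i = 0.

Definition infinite_dim (P : (Vert d -> C) -> Prop) : Prop :=
  forall N : nat, exists f : 'I_N -> Vert d -> C,
    (forall i, P (f i)) /\ lin_indep f.

End Tree.

(* Main.v *)
Require Import Defs.
From HB Require Import structures.
From mathcomp Require Import all_boot all_order all_algebra.
From mathcomp Require Import reals complex.
From mathcomp Require Import zify.
Set Implicit Arguments. Unset Strict Implicit. Unset Printing Implicit Defensive.
Import Order.TTheory GRing.Theory Num.Theory.
Local Open Scope ring_scope.

Lemma linfunE (K : fieldType) (aT rT : vectType K) (f : aT -> rT) (lf : linear f) x :
  linfun f x = f x.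
Proof.
pose F : {linear aT -> rT} := HB.pack f (GRing.isLinear.Build _ _ _ _ f lf).
exact: (lfunE F).
Qed.

Section Tr.
Variables (R : realType) (d : nat -> nat).
Notation C := (R[i]).
Notation Fn := (Fn R d).

Lemma dimFn n : \dim (fullv : {vspace Fn n}) = #|Lev d n|.
Proof. by rewrite dimvf /dim /= muln1. Qed.

Lemma cardLev n : #|Lev d n| = (\prod_(q < n) d q)%N.
Proof. rewrite card_dep_ffun foldrE big_image /=. by apply: eq_bigr => i _; rewrite card_ord. Qed.

Definition trunc m n (h : (m <= n)%N) (v : Lev d n) : Lev d m :=
  [ffun i : 'I_m => v (widen_ord h i) : 'I_(d i)].

Lemma trunc_comp m n k (h1 : (m <= n)%N) (h2 : (n <= k)%N) (h3 : (m <= k)%N) v :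
  trunc h1 (trunc h2 v) = trunc h3 v.
Proof.
apply/ffunP => i; apply: val_inj; rewrite !ffunE /=.
have H : forall a b : 'I_k, a = b -> (v a : nat) = v b by move=> a b ->.
by apply: H; apply: val_inj.
Qed.

Lemma trunc_id m (h : (m <= m)%N) v : trunc h v = v.
Proof.
apply/ffunP => i; apply: val_inj; rewrite !ffunE /=.
have H : forall a b : 'I_m, a = b -> (v a : nat) = v b by move=> a b ->.
by apply: H; apply: val_inj.
Qed.

Definition Pfun m n (h : (m <= n)%N) (y : Fn m) : Fn n :=
  [ffun v => y (trunc h v)].

Lemma Pfun_lin m n (h : (m <= n)%N) : linear (Pfun h).
Proof. by move=> a x y; apply/ffunP => v; rewrite !ffunE. Qed.

Definition Pmap m n (h : (m <= n)%N) : 'Hom(Fn m, Fn n) := linfun (Pfun h).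

Lemma PmapE m n (h : (m <= n)%N) y : Pmap h y = Pfun h y.
Proof. exact: linfunE (Pfun_lin h) y. Qed.

Lemma Hlev_P r : Hlev R d r = Pmap (leqnSn r).
Proof. by []. Qed.

Lemma Pmap_comp m n k (h1 : (m <= n)%N) (h2 : (n <= k)%N) (h3 : (m <= k)%N) :
  (Pmap h2 \o Pmap h1)%VF = Pmap h3.
Proof.
apply/lfunP => y; rewrite comp_lfunE !PmapE; apply/ffunP => v.
by rewrite !ffunE trunc_comp.
Qed.

Lemma Pmap_id m (h : (m <= m)%N) : Pmap h = \1%VF.
Proof.
apply/lfunP => y; rewrite id_lfunE PmapE; apply/ffunP => v.
by rewrite !ffunE trunc_id.
Qed.

Lemma Hit_P m k (U : {vspace Fn m}) : Hit k U = (Pmap (leq_addl k m) @: U)%VS.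
Proof.
elim: k => [|k IH] /=; first by rewrite Pmap_id; symmetry; exact: (lim1g U).
by rewrite IH Hlev_P -limg_comp (Pmap_comp _ _ (leq_addl k.+1 m)).
Qed.

Lemma ecast_P a b (e : a = b) m (U : {vspace Fn m}) (h1 : (m <= a)%N) (h2 : (m <= b)%N) :
  ecast k {vspace Fn k} e (Pmap h1 @: U)%VS = (Pmap h2 @: U)%VS.
Proof. by case: b / e h2 => h2; rewrite (bool_irrelevance h1 h2). Qed.

Lemma Hto_P m n (U : {vspace Fn m}) (h : (m <= n)%N) : Hto n U = (Pmap h @: U)%VS.
Proof.
rewrite /Hto. generalize (erefl (m <= n)%N). generalize (m <= n)%N at 2 3.
case => e; last by rewrite h in e.
by rewrite Hit_P; apply: ecast_P.
Qed.

Section Inj.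
Hypothesis hd : forall r, (0 < d r)%N.

Definition extv m n (w : Lev d m) (j : 'I_n) : nat :=
  if insub (j : nat) : option 'I_m is Some k then (w k : nat) else 0%N.

Lemma extv_lt m n (w : Lev d m) (j : 'I_n) : (extv w j < d j)%N.
Proof.
rewrite /extv; case: insubP => [k _ kj|_]; last exact: hd.
rewrite -kj; exact: ltn_ord.
Qed.

Definition ext m n (w : Lev d m) : Lev d n :=
  [ffun j : 'I_n => Ordinal (extv_lt w j) : 'I_(d j)].

Lemma trunc_ext m n (h : (m <= n)%N) (w : Lev d m) : trunc h (ext n w) = w.
Proof.
apply/ffunP => i; apply: val_inj; rewrite !ffunE /= /extv.
have -> : insub (i : nat) = Some i by exact: valK.
by [].
Qed.

Lemma Pmap_ker m n (h : (m <= n)%N) : lker (Pmap h) == 0%VS.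
Proof.
apply/lker0P => y1 y2; rewrite !PmapE => e; apply/ffunP => w.
have := congr1 (fun f : Fn n => f (ext n w)) e; rewrite /= !ffunE.
by rewrite trunc_ext.
Qed.

Lemma dim_Pmap m n (h : (m <= n)%N) (U : {vspace Fn m}) :
  \dim (Pmap h @: U) = \dim U.
Proof. by apply: limg_dim_eq; rewrite (eqP (Pmap_ker h)) capv0. Qed.
End Inj.

Definition dotS' r (x y : Fn r) : C := \sum_(v : Lev d r) ((x v : C)^*) * (y v : C).

Lemma dotS_lin r (u : Fn r) : linear (fun x : Fn r => (dotS x u : C^o)).
Proof.
move=> a x y; rewrite /dotS /= scaler_sumr -big_split /=; apply: eq_bigr => v _.
by rewrite !ffunE mulrDl scalerAl.
Qed.

Lemma dotS'_lin r (x : Fn r) : linear (fun y : Fn r => (dotS' x y : C^o)).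
Proof.
move=> a y z; rewrite /dotS' /= scaler_sumr -big_split /=; apply: eq_bigr => v _.
by rewrite !ffunE mulrDr scalerAr.
Qed.

Lemma phiE r (u x : Fn r) : linfun (fun x : Fn r => (dotS x u : C^o)) x = dotS x u.
Proof. exact: (linfunE (dotS_lin u) x). Qed.
Lemma psiE r (x y : Fn r) : linfun (fun y : Fn r => (dotS' x y : C^o)) y = dotS' x y.
Proof. exact: (linfunE (dotS'_lin x) y). Qed.

Lemma dotS'E r (x y : Fn r) : dotS' x y = (dotS x y)^*.
Proof.
rewrite /dotS /dotS' rmorph_sum; apply: eq_bigr => v _.
by rewrite rmorphM /= conjCK mulrC.
Qed.

Lemma dotS'_self r (x : Fn r) : dotS' x x = 0 -> x = 0.
Proof.
rewrite /dotS' => /eqP; rewrite psumr_eq0 => [/allP H|v _]; last first.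
  by rewrite mulrC -normCK exprn_ge0.
apply/ffunP => v; rewrite ffunE.
have /eqP := H v (mem_index_enum v).
by rewrite mulrC -normCK => /eqP; rewrite sqrf_eq0 normr_eq0 => /eqP.
Qed.

Lemma mem_bigcap_seq r (s : seq (Fn r)) (V : Fn r -> {vspace Fn r}) x :
  x \in (\bigcap_(u <- s) V u)%VS -> forall u, u \in s -> x \in V u.
Proof.
elim: s => [//|a s IH]; rewrite big_cons memv_cap => /andP[xa xs] u.
by rewrite inE => /orP[/eqP -> //|]; apply: IH.
Qed.

Lemma orth_cap r (W : {vspace Fn r}) : (W :&: orthS W = 0)%VS.
Proof.
apply/eqP; rewrite -subv0; apply/subvP => x; rewrite memv_cap memv0 => /andP[xW xO].
have H (u : Fn r) : u \in vbasis W -> dotS x u = 0.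
  by move=> uW; have := mem_bigcap_seq xO uW; rewrite memv_ker phiE => /eqP.
have sub : (W <= lker (linfun (fun y : Fn r => (dotS' x y : C^o))))%VS.
  rewrite -(span_basis (vbasisP W)); apply/span_subvP => b bW.
  by rewrite memv_ker psiE dotS'E H // conjC0.
have := subvP sub x xW; rewrite memv_ker psiE => /eqP.
by move/dotS'_self => ->.
Qed.

Lemma dim_bigcap r (s : seq (Fn r)) :
  (\dim (fullv : {vspace Fn r}) <=
   \dim (\bigcap_(u <- s) lker (linfun (fun x : Fn r => (dotS x u : C^o)))) + size s)%N.
Proof.
elim: s => [|a s IH]; first by rewrite big_nil addn0.
rewrite big_cons /= capvC.
set L := linfun _; set B := (\bigcap_(_ <- _) _)%VS.
have := limg_ker_dim L B.
have : (\dim (L @: B) <= 1)%N.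
  apply: (leq_trans (dimvS (subvf _))); rewrite dimvf /dim /=. by [].
move=> h1 h2; apply: (leq_trans IH).
change (\dim B + size s <= \dim (B :&: lker L) + (size s).+1)%N.
lia.
Qed.


Lemma dim_orth r (W : {vspace Fn r}) :
  (\dim (orthS W) + \dim W = \dim (fullv : {vspace Fn r}))%N /\ (W + orthS W = fullv)%VS.
Proof.
have h1 : (\dim (fullv : {vspace Fn r}) <= \dim (orthS W) + size (vbasis W))%N := dim_bigcap (vbasis W).
rewrite size_tuple in h1.
have h2 := dimv_sum_cap W (orthS W).
rewrite orth_cap dimv0 addn0 in h2.
have h3 := dimvS (subvf (W + orthS W)).
split; first by lia.
by apply/eqP; rewrite eqEdim subvf /=; lia.
Qed.

Notation Unn := (Unn R d).

Lemma Utab_Unn n m : (m <= n)%N -> Utab R d n m = Unn m.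
Proof.
elim: n m => [|n IH] m; first by rewrite leqn0 => /eqP ->.
move=> le /=; case: ifP => [mn|]; first exact: IH.
move/negbT; rewrite -ltnNge => lt.
have e : m = n.+1 by apply/eqP; rewrite eqn_leq le lt.
by subst m; rewrite /Unn /= ltnn.
Qed.

Lemma Unn_S n : Unn n.+1 = orthS (\sum_(k < n.+1) Hto n.+1 (Unn k))%VS.
Proof.
rewrite /Unn /= ltnn; congr orthS; apply: eq_bigr => k _.
by rewrite Utab_Unn // -ltnS.
Qed.

Lemma sum_full n : (\sum_(k < n.+1) Hto n (Unn k) = fullv)%VS.
Proof.
case: n => [|n].
  by rewrite big_ord1 (Hto_P _ (leqnn 0)) Pmap_id lim1g.
rewrite big_ord_recr /= (Hto_P _ (leqnn _)) Pmap_id lim1g Unn_S.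
exact: (dim_orth _).2.
Qed.

Lemma sum_img n :
  (\sum_(k < n.+1) Hto n.+1 (Unn k))%VS = (Pmap (leqnSn n) @: fullv)%VS.
Proof.
rewrite -(sum_full n) limg_sum; apply: eq_bigr => k _.
have hk : (k <= n)%N by rewrite -ltnS.
rewrite (Hto_P _ hk) (Hto_P _ (leq_trans hk (leqnSn n))) -limg_comp.
by rewrite (Pmap_comp hk (leqnSn n) (leq_trans hk (leqnSn n))).
Qed.

Lemma dimUnn (hd : forall r, (0 < d r)%N) n :
  \dim (Unn n) = if n is n'.+1 then (#|Lev d n'.+1| - #|Lev d n'|)%N else 1%N.
Proof.
case: n => [|n].
  rewrite /Unn /= dimFn cardLev; exact: big_ord0.
have [e _] := dim_orth (\sum_(k < n.+1) Hto n.+1 (Unn k))%VS.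
rewrite -Unn_S sum_img dim_Pmap // !dimFn in e.
lia.
Qed.

Lemma dimUnr (hd : forall r, (0 < d r)%N) n r : (n <= r)%N ->
  \dim (Unr R d n r) = \dim (Unn n).
Proof. by move=> h; rewrite /Unr (Hto_P _ h) dim_Pmap. Qed.

End Tr.

Lemma hd_pos (d : nat -> nat) (hd2 : forall r : nat, (2 <= d r)%N) r : (0 < d r)%N.
Proof. exact: ltnW (hd2 r). Qed.

Lemma dimUnn_pos (R : realType) (d : nat -> nat) (hd2 : forall r : nat, (2 <= d r)%N) n :
  (0 < \dim (Unn R d n))%N.
Proof.
rewrite dimUnn; last exact: hd_pos.
case: n => [//|n].
rewrite !cardLev big_ord_recr /= -{2}(muln1 (\prod_(q < n) d q)) -mulnBr.
rewrite muln_gt0 subn_gt0 hd2 andbT; apply: prodn_gt0 => q; exact: hd_pos.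
Qed.

Lemma part3 (R : realType) (d : nat -> nat) (hd2 : forall r : nat, (2 <= d r)%N) n :
  @infinite_dim R d (@Vn R d n).
Proof.
have hd := hd_pos hd2.
have pos : forall r, (n <= r)%N -> Unr R d n r != 0%VS.
  by move=> r nr; rewrite -dimv_eq0 dimUnr // -lt0n dimUnn_pos.
move=> N.
pose w (r : nat) : Fn R d r := vpick (Unr R d n r).
pose f (i : 'I_N) (x : Vert d) : R[i] :=
  if tag x == (n + i)%N then (w (tag x) (tagged x) : R[i]) else 0.
exists f; split.
- move=> i; split.
  + exists (\sum_(v : Lev d (n + i)) `|w (n + i)%N v| ^+ 2) => N'.
    have E : forall r : nat, \sum_(v : Lev d r) `|f i (existT _ r v)| ^+ 2 =
        if r == (n + i)%N then \sum_(v : Lev d (n + i)) `|w (n + i)%N v| ^+ 2 else 0.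
      move=> r; case: (eqVneq r (n + i)%N) => [->|ne].
        by apply: eq_bigr => v _; rewrite /f /= eqxx.
      by apply: big1 => v _; rewrite /f /= (negbTE ne) normr0 expr0n.
    under eq_bigr do rewrite E.
    set S := \sum_(v : Lev d _) _.
    have S0 : 0 <= S by apply: sumr_ge0 => v _; exact: exprn_ge0.
    case: (ltnP (n + i) N') => h.
      rewrite (bigD1 (Ordinal h)) //= eqxx big1 ?addr0 // => j.
      by rewrite -val_eqE /= => /negbTE ->.
    rewrite big1 // => j _; rewrite ifN //.
    by rewrite neq_ltn (leq_trans (ltn_ord j) h).
  + move=> r; case: (eqVneq r (n + i)%N) => [->|ne].
      have -> : restr (f i) (n + i)%N = w (n + i)%N.
        by apply/ffunP => v; rewrite ffunE /f /= eqxx.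
      by rewrite leq_addr; exact: memv_pick.
    have -> : restr (f i) r = 0.
      by apply/ffunP => v; rewrite !ffunE /f /= (negbTE ne).
    by case: ifP => _; exact: mem0v.
- move=> c hc i.
  have nz : w (n + i)%N != 0 by rewrite vpick0; apply: pos; exact: leq_addr.
  have [v0 hv0] : exists v0, w (n + i)%N v0 != 0.
    case: (pickP (fun v => w (n + i)%N v != 0)) => [v0 h|none]; first by exists v0.
    exfalso; move/eqP: nz; apply; apply/ffunP => v; rewrite !ffunE.
    by move: (none v) => /= /negbFE/eqP.
  have := hc (existT _ (n + i)%N v0).
  rewrite (bigD1 i) //= big1 ?addr0.
    rewrite /f /= eqxx => /eqP; rewrite mulf_eq0 (negbTE hv0) orbF => /eqP.
    by [].
  move=> j ne; rewrite /f /= ifN ?mulr0 //.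
  apply: contra ne => /eqP/addnI e; apply/eqP/val_inj => /=; by rewrite e.
Qed.

Theorem proposition4p3 (R : realType) (d : nat -> nat)
  (hd2 : forall r : nat, (2 <= d r)%N)
  (hdb : exists B : nat, forall r : nat, (d r <= B)%N) :
  (* (1) *)
  (forall n : nat,
     \dim (fullv : {vspace Fn R d n}) = #|Lev d n| /\
     #|Lev d n| = (\prod_(q < n) d q)%N) /\
  (* (2) *)
  (forall n r : nat, (2 <= n)%N -> (n <= r)%N ->
     \dim (Unr R d n r) = ((\prod_(q < n.-1) d q) * (d n.-1 - 1))%N) /\
  (forall r : nat, (1 <= r)%N -> \dim (Unr R d 1 r) = (d 0 - 1)%N) /\
  (forall r : nat, \dim (Unr R d 0 r) = 1%N) /\
  (* (3) *)
  (forall n : nat, @infinite_dim R d (@Vn R d n)).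
Proof.
have hd := hd_pos hd2.
have formula : forall n r, (n.+1 <= r)%N ->
    \dim (Unr R d n.+1 r) = ((\prod_(q < n) d q) * (d n - 1))%N.
  move=> n r h; rewrite dimUnr // dimUnn // !cardLev big_ord_recr /=.
  by rewrite mulnBr muln1.
split; first by move=> n; rewrite dimFn cardLev.
split; first by move=> [|[|n]] r // _ h; rewrite formula.
split; first by move=> r h; rewrite formula // big_ord0 mul1n.
split; first by move=> r; rewrite dimUnr // dimUnn.
exact: part3.
Qed.
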